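(* Let $p$ be a prime, $a,b\in\mathbb{Z}_p$, and $Q=Q_{a,b}(\mathbb{Z}_p)$. Then: (i) if $(a,b)=(0,0)$ and $p\ne3$, $Q$ has exponent $p$; (ii) if $(a,b)\ne(0,0)$ or $p=3$, $Q$ has exponent $p^2$; (iii) if $a=0$, then $N_\mu(Q)\cong\mathbb{Z}_p\times\mathbb{Z}_p$; (iv) if $a\ne0$, then $N_\mu(Q)\cong\mathbb{Z}_{p^2}$.
   Context: Identify $\mathbb{Z}_p$ with $\{0,\dots,p-1\}$. The overflow indicator is $(x,y)_p=1$ if $x+y\ge p$ as integers and $0$ otherwise. $Q_{a,b}(\mathbb{Z}_p)$ is $\mathbb{Z}_p^3$ with multiplication $(x_1,x_2,x_3)(y_1,y_2,y_3)=(x_1+y_1+(x_2+y_2)x_3y_3+a(x_2,y_2)_p+b(x_3,y_3)_p,\ x_2+y_2,\ x_3+y_3)$, a power-associative commutative loop. The exponent is the least $e\ge1$ with $u^e$ equal to the neutral element for all $u$. $N_\mu(Q)=\{y:(xy)z=x(yz)\ \forall x,z\}$, which here is a group. *)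

(* Defs.v *)
From HB Require Import structures.
From mathcomp Require Import all_boot all_order all_algebra.
Set Implicit Arguments. Unset Strict Implicit. Unset Printing Implicit Defensive.
Import GRing.Theory.
Local Open Scope ring_scope.

Definition ovf (p : nat) (x y : 'Z_p) : bool := (p <= val x + val y)%N.

Definition Qcar (p : nat) := ('Z_p * 'Z_p * 'Z_p)%type.

Definition qmul (p : nat) (a b : 'Z_p) (x y : Qcar p) : Qcar p :=
  let: (x1, x2, x3) := x in
  let: (y1, y2, y3) := y in
  (x1 + y1 + (x2 + y2) * x3 * y3 + a *+ ovf x2 y2 + b *+ ovf x3 y3,
   x2 + y2, x3 + y3).

Definition qone (p : nat) : Qcar p := (0, 0, 0).

(* u^n, well defined since the loop is power-associative *)
Definition qpow (p : nat) (a b : 'Z_p) (u : Qcar p) (n : nat) : Qcar p :=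
  iter n (fun v => qmul a b v u) (qone p).

Definition has_exponent (p : nat) (a b : 'Z_p) (e : nat) : Prop :=
  (0 < e)%N /\ (forall u, qpow a b u e = qone p) /\
  (forall e', (0 < e')%N -> (forall u, qpow a b u e' = qone p) -> (e <= e')%N).

Definition Nmu (p : nat) (a b : 'Z_p) : {set Qcar p} :=
  [set y | [forall x, [forall z,
     qmul a b (qmul a b x y) z == qmul a b x (qmul a b y z)]]].

Definition iso_to (T : finType) (N : {set T}) (mul : T -> T -> T)
  (V : zmodType) : Prop :=
  exists f : T -> V,
    [/\ {in N &, injective f},
        (forall v, exists2 x, x \in N & f x = v) &
        {in N &, forall x y, f (mul x y) = f x + f y}].

(* Main.v *)
From Stdlib Require Import Ring Arith Lia.
Require Import Defs.
From mathcomp Require Import all_boot all_order all_algebra.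
Import GRing.Theory.



Fixpoint T n := if n is m.+1 then (T m + m.+1 * m)%N else 0%N.
Lemma TS n : T n.+1 = (T n + n.+1 * n)%N. Proof. by []. Qed.

Lemma T3 n : 3 * T n.+1 = n.+2 * n.+1 * n.
Proof.
elim: n => [//|n IH].
rewrite TS mulnDr IH [3 * _]mulnC -mulnDr addn3.
by rewrite mulnC mulnA.
Qed.

Lemma cop3 {p} : prime p -> p != 3 -> coprime p 3.
Proof. by move=> pp p3; rewrite prime_coprime // dvdn_prime2. Qed.

Lemma D1 p : prime p -> p != 3 -> p %| T p.
Proof.
move=> pp p3; rewrite -(@Gauss_dvdr p 3 _ (cop3 pp p3)).
case: p pp p3 => [//|q] pp p3.
by rewrite T3 dvdn_mulr // dvdn_mull.
Qed.

Lemma D2 p : prime p -> p %| T (p ^ 2).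
Proof.
move=> pp.
have h : p ^ 2 %| 3 * T (p ^ 2).
  have: 0 < p ^ 2 by rewrite expn_gt0 prime_gt0.
  case: (p ^ 2) => [//|q] _.
  by rewrite T3 dvdn_mulr // dvdn_mull.
have [/eqP p3|p3] := boolP (p == 3).
  subst p; have h' : 3 * 3 %| 3 * T (3 ^ 2) := h.
  by rewrite dvdn_pmul2l in h'.
rewrite -(@Gauss_dvdr p 3 _ (cop3 pp p3)).
apply: dvdn_trans h; exact: dvdn_exp.
Qed.

Lemma D3 m : 0 < m -> 3 %| T (m * 3) -> 3 %| m.
Proof.
case: m => [//|k] _ h.
have e : k.+1 * 3 = (k * 3 + 2).+1 by rewrite mulSn addnC addnS addnS addnS addn0.
have h9 : 3 * 3 %| 3 * T (k.+1 * 3) by rewrite dvdn_pmul2l.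
rewrite e T3 -e in h9.
have g : forall X K Y, X * (K * 3) * Y = 3 * (X * K * Y).
  by move=> X K Y; rewrite mulnA (mulnC (X * K)) -mulnA.
rewrite g dvdn_pmul2l // !Euclid_dvdM // in h9.
rewrite -[(k.+1 * 3).+1]addn1 !dvdn_addr ?dvdn_mull // in h9.
by case/orP: h9 => [/orP [] |] //.
Qed.

Local Open Scope ring_scope.

Section S.
Variable p : nat.
Hypothesis hp : (1 < p)%N.

Lemma vlt (x : 'Z_p) : (val x < p)%N.
Proof. apply: (leq_trans (ltn_ord x)); by rewrite Zp_cast. Qed.
Lemma modZ m : (m %% (Zp_trunc p).+2 = m %% p)%N.
Proof. by rewrite Zp_cast. Qed.
Lemma vinZp k : val (inZp k : 'Z_p) = (k %% p)%N.
Proof. exact: modZ. Qed.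
Lemma vadd (x y : 'Z_p) : val (x + y) = ((val x + val y) %% p)%N.
Proof. by rewrite /= modZ. Qed.
Lemma vmul (x : 'Z_p) n : val (x *+ n) = ((val x * n) %% p)%N.
Proof. by rewrite Zp_mulrn /= modZ. Qed.
Lemma val1 : val (1 : 'Z_p) = 1%N.
Proof. by rewrite /= modZ modn_small. Qed.

Lemma div_small2 m : (m < p + p)%N -> (m %/ p)%N = (p <= m)%N.
Proof.
move=> hm; case: leqP => h.
  rewrite -(subnKC h) divnDl // divnn (ltnW hp) divn_small //.
  by rewrite -(ltn_add2l p) subnKC.
by rewrite divn_small.
Qed.

Lemma lt2 m n : (m < p)%N -> (n < p)%N -> (m + n < p + p)%N.
Proof. by move=> ha hb; rewrite -addnS leq_add // ltnW. Qed.

Lemma ovfE (x y : 'Z_p) : ovf x y = ((val x + val y) %/ p)%N :> nat.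
Proof. by rewrite /ovf div_small2 //; apply: lt2; apply: vlt. Qed.

Lemma p0 : (0 < p)%N. Proof. exact: ltnW. Qed.

Lemma ovf_sum (x y z : 'Z_p) :
  (ovf x y + ovf (x + y)%R z = (val x + val y + val z) %/ p)%N.
Proof.
rewrite !ovfE vadd (divnD (val x + val y) (val z) p0) (modn_small (vlt z)).
rewrite (divn_small (vlt z)) addn0 (div_small2 ((val x + val y) %% p + val z)%N) //; apply: lt2; [exact: ltn_pmod _ p0 | exact: vlt].
Qed.

Lemma ovf_sum' (x y z : 'Z_p) :
  (ovf y z + ovf x (y + z)%R = (val x + val y + val z) %/ p)%N.
Proof.
rewrite !ovfE vadd -addnA (divnD (val x) (val y + val z) p0) (modn_small (vlt x)).
rewrite (divn_small (vlt x)) add0n (div_small2 (val x + (val y + val z) %% p)%N) //; apply: lt2; [exact: vlt | exact: ltn_pmod _ p0].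
Qed.

Lemma ovf_assoc (x y z : 'Z_p) :
  (ovf x y + ovf (x + y)%R z = ovf y z + ovf x (y + z)%R)%N.
Proof. by rewrite ovf_sum ovf_sum'. Qed.

Lemma ovf0r (x : 'Z_p) : ovf x 0 = false.
Proof. by rewrite /ovf /= addn0 leqNgt vlt. Qed.
Lemma ovf0l (x : 'Z_p) : ovf 0 x = false.
Proof. by rewrite /ovf /= leqNgt vlt. Qed.

Lemma zp_nat0 n : ((n%:R : 'Z_p) == 0) = (p %| n)%N.
Proof. by rewrite -val_eqE /= val_Zp_nat. Qed.

Lemma shuffle8 (V : zmodType) (a1 a2 a3 a4 a5 a6 a7 a8 : V) :
  a1+a2+a3+a4+a5+a6+a7+a8 = (a1+a5)+(a2+a6)+(a3+a7)+(a4+a8).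
Proof. by rewrite (ACl ((1*5)*(2*6)*(3*7)*(4*8))%AC). Qed.

Lemma carry (x : 'Z_p) n :
  (val x * n.+1 %/ p = val x * n %/ p + ovf (x *+ n) x)%N.
Proof.
rewrite ovfE vmul mulnSr (divnD _ _ p0) (modn_small (vlt x)) (divn_small (vlt x)) addn0.
by rewrite (div_small2 ((val x * n) %% p + val x)%N) //; apply: lt2; [exact: ltn_pmod _ p0 | exact: vlt].
Qed.

Lemma stepid (x2 x3 : 'Z_p) n :
  (x2 *+ n + x2) * (x3 *+ n) * x3 = x2 * x3 ^+ 2 *+ (n.+1 * n).
Proof.
by rewrite -mulrSr mulrnAl mulrnAr mulrnAl mulrnAl -mulrA -expr2 mulnC mulrnA.
Qed.

Lemma qpowE (a b x1 x2 x3 : 'Z_p) n :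
  qpow a b (x1, x2, x3) n =
  (x1 *+ n + x2 * x3 ^+ 2 *+ T n + a *+ (val x2 * n %/ p) + b *+ (val x3 * n %/ p),
   x2 *+ n, x3 *+ n).
Proof.
elim: n => [|n IH].
  by rewrite /qpow /= !muln0 div0n !mulr0n !addr0.
rewrite /qpow iterS -/(qpow a b (x1, x2, x3) n) IH /qmul.
rewrite -!mulrSr; congr (_, _, _).
by rewrite (mulrSr x2) stepid !carry (mulrSr x1) TS !mulrnDr shuffle8.
Qed.

Lemma NmuE (a b y1 y2 y3 : 'Z_p) : ((y1, y2, y3) \in Nmu a b) = (y3 == 0).
Proof.
rewrite inE; apply/forallP/eqP.
  move=> /(_ (0, 1, 0)) /forallP /(_ (0, 0, 1)) /eqP.
  move=> /(congr1 (fun t : Qcar p => t.1.1)); rewrite /qmul /= => h.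
  rewrite !(mulr0, mul0r, addr0, add0r, mulr1, ovf0r, ovf0l, mulr0n) in h.
  rewrite mulrDl mul1r !addrA (ACl ((1*4*5*2)*3)%AC) -[RHS]addr0 in h.
  exact: addrI h.
move=> -> [[x1 x2] x3]; apply/forallP=> [[[z1 z2] z3]]; apply/eqP; rewrite /qmul.
congr (_, _, _); rewrite ?addrA //.
rewrite !(mulr0, mul0r, addr0, add0r, ovf0r, ovf0l, mulr0n).
rewrite [LHS](ACl ((1*2*4*5*7)*(3*6))%AC) [RHS](ACl ((1*2*3*5*7)*(4*6))%AC).
by rewrite /= -!mulrnDr ovf_assoc.
Qed.

Lemma mulrn_p0 (x : 'Z_p) k : (p %| k)%N -> x *+ k = 0.
Proof. by move/dvdnP=> [q ->]; rewrite mulrnA -mulr_natr pchar_Zp // mulr0. Qed.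

Lemma vpos (a : 'Z_p) : a != 0 -> (0 < val a)%N.
Proof. by rewrite lt0n; apply: contra => /eqP h; apply/eqP/val_inj. Qed.

Hypothesis pp : prime p.

Lemma ndiv (a : 'Z_p) : a != 0 -> ~~ (p %| val a)%N.
Proof.
move=> a0; apply/negP => /(dvdn_leq (vpos _ a0)); by rewrite leqNgt vlt.
Qed.

Lemma cancel_mulrn (a : 'Z_p) m : a != 0 -> a *+ m = 0 -> (p %| m)%N.
Proof.
move=> a0 h.
have : (p %| val a * m)%N by rewrite /dvdn -vmul h.
by rewrite Euclid_dvdM // (negbTE (ndiv _ a0)).
Qed.

End S.

Theorem lemma5p5 (p : nat) (a b : 'Z_p) : prime p ->
  [/\ (a = 0 /\ b = 0 /\ p != 3%N -> has_exponent a b p),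
      ((a != 0) || (b != 0) || (p == 3%N) -> has_exponent a b (p ^ 2)%N),
      (a = 0 -> iso_to (Nmu a b) (qmul a b) ('Z_p * 'Z_p)%type) &
      (a != 0 -> iso_to (Nmu a b) (qmul a b) 'Z_(p ^ 2))].
Proof.
move=> pp; have hp := prime_gt1 pp.
have base : forall e, (forall u, qpow a b u e = qone p) -> (p %| e)%N.
  move=> e /(_ (1, 0, 0)); rewrite (qpowE _ hp) /qone.
  move=> /(congr1 (fun t : Qcar p => t.1.1)) /=.
  rewrite mul0r mul0rn !mul0n div0n !mulr0n !addr0 => h.
  by rewrite -(zp_nat0 _ hp) h.
have dm : forall v, (p %| v * p)%N by move=> v; exact: dvdn_mull.
split.
- case=> a0 [b0 p3]; split; first exact: prime_gt0 pp.
  split; last by move=> e e0 he; exact: dvdn_leq e0 (base e he).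
  move=> [[x1 x2] x3]; rewrite (qpowE _ hp) /qone a0 b0 !mul0rn !addr0.
  by rewrite !(mulrn_p0 _ hp _ _ (dvdnn p)) (mulrn_p0 _ hp _ _ (D1 _ pp p3)) addr0.
- move=> H; split; first by rewrite expn_gt0 prime_gt0.
  split.
    move=> [[x1 x2] x3]; rewrite (qpowE _ hp) /qone.
    have dv : (p %| p ^ 2)%N by apply: dvdn_exp.
    have hd : forall v, (v * p ^ 2 %/ p = v * p)%N.
      by move=> v; rewrite expnS expn1 mulnA mulnK // prime_gt0.
    rewrite !hd !(mulrn_p0 _ hp _ _ dv) (mulrn_p0 _ hp _ _ (D2 _ pp)).
    by rewrite !(mulrn_p0 _ hp _ _ (dm _)) !addr0.
  move=> e e0 he; have /dvdnP [m em] := base _ he; subst e.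
  have m0 : (0 < m)%N by move: e0; rewrite muln_gt0 => /andP [].
  suff pm : (p %| m)%N.
    apply: dvdn_leq => //; move/dvdnP: pm => [j ->].
    by rewrite -mulnA mulnn dvdn_mull.
  have [a0|a0] := eqVneq a 0.
    have [b0|b0] := eqVneq b 0.
      move: H; rewrite a0 b0 eqxx /= => /eqP p3.
      move: (he (0, 1, 1)); rewrite (qpowE _ hp) /qone (val1 _ hp).
      move=> /(congr1 (fun t : Qcar p => t.1.1)) /=.
      rewrite a0 b0 !mul0rn expr1n mulr1 add0r !addr0 => /eqP.
      rewrite (zp_nat0 _ hp) p3 => h; exact: D3 m0 h.
    move: (he (0, 0, 1)); rewrite (qpowE _ hp) /qone (val1 _ hp).
    move=> /(congr1 (fun t : Qcar p => t.1.1)) /=.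
    rewrite !(mul0rn, mul0r, mul0n, div0n, mulr0n, mul1n, add0r, addr0) mulnK ?prime_gt0 // => h.
    exact: (@cancel_mulrn p hp pp b m b0 h).
  move: (he (0, 1, 0)); rewrite (qpowE _ hp) /qone (val1 _ hp).
  move=> /(congr1 (fun t : Qcar p => t.1.1)) /=.
  rewrite expr2 !(mulr0, mul0rn, mul0r, mul0n, div0n, mulr0n, mul1n, add0r, addr0) mulnK ?prime_gt0 // => h.
  exact: (@cancel_mulrn p hp pp a m a0 h).
- move=> a0; exists (fun t : Qcar p => (t.1.1, t.1.2)); split.
  + move=> [[x1 x2] x3] [[y1 y2] y3]; rewrite !(NmuE _ hp) => /eqP -> /eqP -> /=.
    by case=> -> ->.
  + by move=> [v1 v2]; exists (v1, v2, 0); rewrite ?(NmuE _ hp).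
  + move=> [[x1 x2] x3] [[y1 y2] y3]; rewrite !(NmuE _ hp) => /eqP -> /eqP ->.
    by rewrite /qmul a0 !mulr0 mul0rn ovf0r // mulr0n !addr0.
- move=> a0.
  have ua : a \is a GRing.unit.
    by rewrite -(natr_Zp a) unitZpE // prime_coprime // (@ndiv p hp a a0).
  have hp2 : (1 < p ^ 2)%N by rewrite (ltn_trans hp) // -mulnn ltn_Pmull // ltnW.
  pose f := fun t : Qcar p => ((val t.1.2 + p * val (t.1.1 * a^-1)%R)%N%:R : 'Z_(p ^ 2)).
  have vf : forall t1 t2 t3, val (f (t1, t2, t3)) = ((val t2 + p * val (t1 * a^-1)%R) %% p ^ 2)%N.
    by move=> t1 t2 t3; apply: val_Zp_nat.
  have bound : forall v w, (v < p)%N -> (w < p)%N -> (v + p * w < p ^ 2)%N.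
    move=> v w hv hw; apply: (@leq_trans (p + p * w)); first by rewrite ltn_add2r.
    by rewrite -mulnS -mulnn leq_mul2l hw orbT.
  have spl : forall v w v' w', (v < p)%N -> (v' < p)%N -> (v + p * w = v' + p * w')%N ->
      v = v' /\ w = w'.
    move=> v w v' w' hv hv' e; split.
      have := congr1 (modn^~ p) e; rewrite /= ![(_ + p * _)%N]addnC ![(p * _)%N]mulnC.
      by rewrite !modnMDl !modn_small.
    have := congr1 (divn^~ p) e; rewrite /= ![(_ + p * _)%N]addnC ![(p * _)%N]mulnC.
    by rewrite !divnMDl ?prime_gt0 // !divn_small // !addn0.
  exists f; split.
  + move=> [[x1 x2] x3] [[y1 y2] y3]; rewrite !(NmuE _ hp) => /eqP -> /eqP ->.
    move=> /(congr1 val); rewrite !vf !modn_small ?bound ?(vlt _ hp) // => e.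
    have [e2 e1] := spl _ _ _ _ (vlt _ hp _) (vlt _ hp _) e.
    have -> : x2 = y2 by apply: val_inj.
    suff -> : x1 = y1 by [].
    have uv : a^-1 \is a GRing.unit by rewrite unitrV.
    by apply: (mulIr uv); apply: val_inj.
  + move=> v; exists ((inZp (val v %/ p) : 'Z_p) * a, (inZp (val v %% p) : 'Z_p), 0).
      by rewrite (NmuE _ hp).
    apply: val_inj; rewrite vf mulrK // !(vinZp _ hp) modn_mod.
    rewrite (@modn_small (val v %/ p)) ?ltn_divLR ?prime_gt0 // ?mulnn ?vlt //.
    by rewrite addnC mulnC -divn_eq modn_small // vlt.
  + move=> [[x1 x2] x3] [[y1 y2] y3]; rewrite !(NmuE _ hp) => /eqP -> /eqP ->.
    rewrite /qmul !mulr0 ovf0r // mulr0n !addr0.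
    apply: val_inj; rewrite (vadd _ hp2) !vf modnDm.
    rewrite !mulrDl mulrnAl mulrV // !(vadd _ hp) (vmul _ hp) (val1 _ hp) mul1n.
    rewrite modnDml modnDmr muln_modr mulnn modnDmr (ovfE _ hp).
    congr (_ %% _)%N.
    move: (val x2) (val y2) (val (x1 / a)) (val (y1 / a)) => X Y U V.
    have := divn_eq (X + Y) p.
    move: ((X + Y) %/ p)%N ((X + Y) %% p)%N => q r e.
    rewrite -!plusE -!multE in e *; nia.
Qed.
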